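(* Let $m\ge 2$ and $\alpha\in[0,1]$. Every deterministic voting rule $f$ that takes ranked preferences with intensities as input has, under mandatory elicitation of the intensities, metric distortion $$\mathsf{dist}_\alpha(f)\;\ge\;1+2\max\left(\alpha,\ \frac{1-\alpha^{\lfloor m/2\rfloor}}{1+\alpha^{\lfloor m/2\rfloor}}\right).$$
   Context: An election $\mathcal E=(N,A,\vec\sigma)$ has a finite set $N$ of $n$ agents, a set $A$ of $m$ alternatives, and a profile $\vec\sigma=(\sigma_1,\dots,\sigma_n)$. Each $\sigma_i=(\pi_i,\Join_i)$ consists of a bijection $\pi_i:[m]\to A$, where $\pi_i(1)$ is agent $i$'s most preferred alternative, and a map $\Join_i:[m-1]\to\{\succ,\succ\!\!\succ\}$. Here $\Join_i(j)=\,\succ\!\!\succ$ means a strong preference for $\pi_i(j)$ over $\pi_i(j+1)$, and $\Join_i(j)=\,\succ$ means an ordinary preference. A metric $d$ on $N\cup A$ is nonnegative and symmetric, satisfies the triangle inequality, and has $d(x,x)=0$. For $\alpha\in[0,1]$, the profile $\vec\sigma$ is $\alpha$-consistent with $d$ under mandatory elicitation if for every agent $i$ and every $j\in[m-1]$: - if $\Join_i(j)=\,\succ$, then $d(i,\pi_i(j+1))\ge d(i,\pi_i(j))>\alpha\, d(i,\pi_i(j+1))$; - if $\Join_i(j)=\,\succ\!\!\succ$, then $d(i,\pi_i(j))\le \alpha\, d(i,\pi_i(j+1))$. The social cost of $a$ is $\mathrm{sc}_d(a)=\sum_{i\in N}d(i,a)$. The distortion of $a$ is $\mathsf{dist}_\alpha(a,\mathcal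 E)=\sup_{d}\ \mathrm{sc}_d(a)/\min_{b\in A}\mathrm{sc}_d(b)$, where the supremum is over metrics $d$ with which $\vec\sigma$ is $\alpha$-consistent under mandatory elicitation. A deterministic voting rule $f$ maps every profile (for any number of agents) over the $m$ alternatives to an alternative. Its distortion is $\mathsf{dist}_\alpha(f)=\sup_{\mathcal E}\mathsf{dist}_\alpha(f(\vec\sigma),\mathcal E)$, with the supremum over all elections with $m$ alternatives. *)

(* Defs.v *)
From HB Require Import structures.
From mathcomp Require Import all_boot all_order all_algebra all_fingroup.
From mathcomp Require Import all_classical all_reals ereal.
Set Implicit Arguments. Unset Strict Implicit. Unset Printing Implicit Defensive.
Import Order.TTheory GRing.Theory Num.Theory.
Local Open Scope ring_scope.

(* Alternatives are 'I_m; positions in a ranking are 'I_m (0-indexed).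
   A ballot (pi, J): pi : {perm 'I_m} maps position k to an alternative
   (pi 0 is the favourite); J : {ffun 'I_m.-1 -> bool}, J j = true means a
   strong preference (>>) between positions j and j+1, false means (>). *)
Definition ballot (m : nat) := ({perm 'I_m} * {ffun 'I_m.-1 -> bool})%type.

Definition profile (n m : nat) := {ffun 'I_n -> ballot m}.

Definition point (n m : nat) := ('I_n + 'I_m)%type.

Definition is_metric (R : realType) (T : Type) (d : T -> T -> R) : Prop :=
  (forall x y, 0 <= d x y) /\ (forall x y, d x y = d y x) /\
  (forall x, d x x = 0) /\ (forall x y z, d x z <= d x y + d y z).

Definition consistent (R : realType) (alpha : R) (n m : nat)
    (sigma : profile n m) (d : point n m -> point n m -> R) : Prop :=
  forall (i : 'I_n) (j : 'I_m.-1) (k1 k2 : 'I_m),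
    val k1 = val j -> val k2 = (val j).+1 ->
    let a := (sigma i).1 k1 in
    let b := (sigma i).1 k2 in
    if (sigma i).2 j
    then d (inl i) (inr a) <= alpha * d (inl i) (inr b)
    else (d (inl i) (inr a) <= d (inl i) (inr b)) &&
         (alpha * d (inl i) (inr b) < d (inl i) (inr a)).

Definition social_cost (R : realType) (n m : nat)
    (d : point n m -> point n m -> R) (a : 'I_m) : R :=
  \sum_(i < n) d (inl i) (inr a).

(* min_{b in A} sc_d(b) (A is nonempty since a : 'I_m). *)
Definition min_cost (R : realType) (n m : nat)
    (d : point n m -> point n m -> R) (a : 'I_m) : R :=
  \big[Num.min/social_cost d a]_(b < m) social_cost d b.

(* The ratio sc_d(a) / min_b sc_d(b) as an extended real, with the
   conventions x/0 = +oo for x > 0 and 0/0 = 1. *)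
Definition cost_ratio (R : realType) (n m : nat)
    (d : point n m -> point n m -> R) (a : 'I_m) : \bar R :=
  if 0 < min_cost d a then ((social_cost d a) / (min_cost d a))%:E
  else if 0 < social_cost d a then +oo%E else 1%E.

Definition distortion (R : realType) (alpha : R) (n m : nat)
    (sigma : profile n m) (a : 'I_m) : \bar R :=
  ereal_sup [set r | exists d : point n m -> point n m -> R,
     [/\ is_metric d, consistent alpha sigma d & r = cost_ratio d a]].

Definition voting_rule (m : nat) := forall n : nat, profile n m -> 'I_m.

Definition rule_distortion (R : realType) (alpha : R) (m : nat)
    (f : voting_rule m) : \bar R :=
  ereal_sup [set r | exists (n : nat) (sigma : profile n m),
     r = distortion alpha sigma (f n sigma)].

(* Main.v *)
Require Import Defs.
From HB Require Import structures.
From mathcomp Require Import all_boot all_order all_algebra all_fingroup.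
From mathcomp Require Import all_classical all_reals ereal.
From mathcomp Require Import lra zify ring.
From Stdlib Require Import Lia.
Import Order.TTheory GRing.Theory Num.Theory.
Set Implicit Arguments. Unset Strict Implicit. Unset Printing Implicit Defensive.
Local Open Scope ring_scope.



Definition ldist (R : realType) (T : Type) (cu cv : T -> R) (p q : T) : R :=
  Num.max `|cu p - cu q| `|cv p - cv q|.

Lemma ldist_metric (R : realType) (T : Type) (cu cv : T -> R) :
  is_metric (ldist cu cv).
Proof.
rewrite /ldist; split; [|split; [|split]].
- by move=> x y; rewrite le_max normr_ge0.
- by move=> x y; rewrite (distrC (cu x)) (distrC (cv x)).
- by move=> x; rewrite !subrr normr0 maxxx.
- move=> x y z; rewrite ge_max; apply/andP; split.
  + apply: (le_trans (ler_distD (cu y) _ _)); apply: lerD; rewrite le_max lexx ?orbT //.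
  + apply: (le_trans (ler_distD (cv y) _ _)); apply: lerD; rewrite le_max lexx ?orbT //.
Qed.

Lemma sc2 (R : realType) (m : nat) (d : Defs.point 2 m -> Defs.point 2 m -> R) (y : 'I_m) :
  social_cost d y = d (inl ord0) (inr y) + d (inl ord_max) (inr y).
Proof.
rewrite /social_cost !big_ord_recl big_ord0 addr0.
congr (_ + _); congr (d (inl _) _); exact: val_inj.
Qed.

Lemma ratio_ge (R : realType) (n m : nat) (d : Defs.point n m -> Defs.point n m -> R)
   (c b : 'I_m) (r : R) :
  (forall y, 0 < social_cost d y) -> 0 <= r ->
  social_cost d b * r <= social_cost d c -> (r%:E <= cost_ratio d c)%E.
Proof.
move=> pos r0 H.
have mpos : 0 < min_cost d c by apply: lt_bigmin => //.
have mle : min_cost d c <= social_cost d b by apply: bigmin_le.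
rewrite /cost_ratio mpos lee_fin ler_pdivlMr //.
apply: le_trans H; rewrite mulrC; exact: ler_wpM2r.
Qed.

Lemma ratio_oo (R : realType) (n m : nat) (d : Defs.point n m -> Defs.point n m -> R)
   (c b : 'I_m) :
  social_cost d b <= 0 -> 0 < social_cost d c -> cost_ratio d c = +oo%E.
Proof.
move=> hb hc.
have mle : min_cost d c <= social_cost d b by apply: bigmin_le.
rewrite /cost_ratio hc ifF //; apply/negbTE; rewrite -leNgt.
exact: le_trans hb.
Qed.

Lemma rd_ge (R : realType) (alpha : R) (m : nat) (f : voting_rule m) (n : nat)
  (sigma : profile n m) (d : Defs.point n m -> Defs.point n m -> R) (x : \bar R) :
  is_metric d -> consistent alpha sigma d -> (x <= cost_ratio d (f n sigma))%E ->
  (x <= rule_distortion alpha f)%E.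
Proof.
move=> hm hc hx; apply: (le_trans hx).
apply: (le_trans (y := distortion alpha sigma (f n sigma))).
  by apply: ereal_sup_ubound; exists d; split.
by apply: ereal_sup_ubound; exists n, sigma.
Qed.

Lemma bernoulli (R : realType) (s : R) (n : nat) :
  0 <= s -> 1 - n%:R * (1 - s) <= s ^+ n.
Proof.
move=> s0; elim: n => [|n IH]; first by rewrite mul0r subr0 expr0.
rewrite exprS -natr1.
have h : s * (1 - n%:R * (1 - s)) <= s * s ^+ n by apply: ler_wpM2l.
apply: le_trans h.
have hn : 0 <= n%:R :> R by [].
have := mulr_ge0 hn (sqr_ge0 (1 - s)).
nra.
Qed.

Lemma sup_approx (R : realType) (L : R) (X : \bar R) :
  (forall z, z < L -> (z%:E <= X)%E) -> (L%:E <= X)%E.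
Proof.
case: X => [r| |] H.
- rewrite lee_fin leNgt; apply/negP => hr.
  have := H ((r + L) / 2); rewrite lee_fin; lra.
- by rewrite leey.
- by have := H (L - 1); rewrite leeNy_eq; move/(_ ltac:(lra)).
Qed.

Lemma other2 (iA : 'I_2) : ord0 != iA -> ord_max = iA.
Proof. by move=> hb; apply: val_inj; case: iA hb => [[|[|k]]] //= ? ?. Qed.



Definition sigmaB (m : nat) : profile 2 m :=
  [ffun i : 'I_2 => if val i == 0%N
     then ((1%g : {perm 'I_m}), [ffun _ : 'I_m.-1 => false])
     else (perm (@rev_ord_inj m), [ffun _ : 'I_m.-1 => false])].

Definition gB (R : realType) (x t : R) (p : nat) : R := Num.min (x * t ^+ p) (x + 2).

Lemma gB_step (R : realType) (alpha x t : R) (p : nat) :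
  0 <= alpha -> alpha < 1 -> 0 < x -> 1 < t -> alpha * t < 1 ->
  gB x t p <= gB x t p.+1 /\ alpha * gB x t p.+1 < gB x t p.
Proof.
move=> a0 a1 x0 t1 at1; rewrite /gB exprS.
set a := x * t ^+ p.
have apos : 0 < a by rewrite mulr_gt0 // exprn_gt0 // (lt_trans ltr01).
have e : x * (t * t ^+ p) = a * t by rewrite /a mulrCA mulrC.
rewrite e.
have h1 : a <= a * t by rewrite ler_peMr // ltW.
have h2 : alpha * (a * t) < a.
  have h3 : 0 < 1 - alpha * t by rewrite subr_gt0.
  have := mulr_gt0 apos h3; nra.
case: (leP a (x + 2)) => ha; case: (leP (a * t) (x + 2)) => hat.
- by [].
- split; first lra.
  apply: le_lt_trans h2; apply: ler_wpM2l => //; exact: ltW.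
- lra.
- split => //; nra.
Qed.

Lemma gB_range (R : realType) (x t : R) (p : nat) :
  0 < x -> 1 < t -> x <= gB x t p <= x + 2.
Proof.
move=> x0 t1; rewrite /gB ge_min le_min lexx orbT andbT; apply/andP; split.
  have := exprn_ege1 p (ltW t1); nra.
lra.
Qed.

Definition rB (m : nat) (iB : 'I_2) (y : 'I_m) : nat := val (((sigmaB m) iB).1^-1%g y).

Definition cuB (R : realType) (m : nat) (x t : R) (iB : 'I_2) (p : Defs.point 2 m) : R :=
  match p with inl i => if i == iB then 0 else x + 1 | inr y => gB x t (rB iB y) end.
Definition cvB (R : realType) (m : nat) (iB : 'I_2) (p : Defs.point 2 m) : R :=
  match p with inl i => if i == iB then 0 else 1 | inr y => 0 end.
Arguments cvB {R m} iB p.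

Lemma dB (R : realType) (m : nat) (x t : R) (iB i : 'I_2) (y : 'I_m) :
  0 < x -> 1 < t ->
  ldist (cuB x t iB) (cvB iB) (inl i) (inr y) = if i == iB then gB x t (rB iB y) else 1.
Proof.
move=> x0 t1; have /andP[g1 g2] := gB_range (rB iB y) x0 t1.
rewrite /ldist /=; case: eqP => _.
  rewrite !sub0r !normrN normr0 ger0_norm; last lra.
  by rewrite max_l //; lra.
rewrite subr0 normr1 max_r //.
rewrite ler_norml; apply/andP; split; lra.
Qed.

Lemma consB (R : realType) (m : nat) (alpha x t : R) (iB : 'I_2) :
  0 <= alpha -> alpha < 1 -> 0 < x -> 1 < t -> alpha * t < 1 ->
  consistent alpha (sigmaB m) (ldist (cuB x t iB) (cvB iB)).
Proof.
move=> a0 a1 x0 t1 at1 i j k1 k2 h1 h2 /=.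
have -> : ((sigmaB m) i).2 j = false by rewrite /sigmaB ffunE; case: ifP => _; rewrite ffunE.
rewrite !dB //; case: eqP => [->|_].
  rewrite /rB !permK h1 h2.
  by have [-> ->] := gB_step (val j) a0 a1 x0 t1 at1.
by rewrite lexx mulr1.
Qed.

Lemma scB (R : realType) (m : nat) (x t : R) (iB : 'I_2) (y : 'I_m) :
  0 < x -> 1 < t ->
  social_cost (ldist (cuB x t iB) (cvB iB)) y = gB x t (rB iB y) + 1.
Proof.
move=> x0 t1; rewrite sc2 !dB //.
have hne : (ord_max : 'I_2) != ord0 by [].
case: (eqVneq ord0 iB) => [<-|hb].
  by rewrite (negbTE hne).
have -> : (ord_max : 'I_2) = iB.
  by apply: val_inj; case: iB hb => [[|[|k]]] //= ? ?.
by rewrite eqxx addrC.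
Qed.

Lemma constrB (R : realType) (m : nat) (alpha : R) (f : voting_rule m) (t x : R) :
  (2 <= m)%N -> 0 <= alpha -> alpha < 1 -> 1 < t -> alpha * t < 1 -> 0 < x ->
  x + 2 <= x * t ^+ (m./2) ->
  (((3 + x) / (1 + x))%:E <= rule_distortion alpha f)%E.
Proof.
move=> hm a0 a1 t1 at1 x0 hx.
set sigma := sigmaB m; set c := f 2 sigma.
set iB : 'I_2 := if (m./2 <= val c)%N then ord0 else ord_max.
have hk : (m./2 <= rB iB c)%N.
  rewrite /rB /iB; case: ifP => hc.
    by rewrite /sigmaB ffunE /= invg1 perm1.
  rewrite /sigmaB ffunE /=.
  have -> : (perm (@rev_ord_inj m))^-1%g c = rev_ord c.
    by apply: (perm_inj (s := perm (@rev_ord_inj m))); rewrite permKV permE rev_ordK.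
  rewrite /=; move/negbT: hc; rewrite -ltnNge => hc.
  have := odd_double_half m; rewrite -addnn => hh.
  have := ltn_ord c; move: hc hh; rewrite /=.
  move: (nat_of_ord c) (m./2) => cc kk; lia.
set o0 : 'I_m := Ordinal (leq_trans (isT : (0 < 2)%N) hm).
set b := (sigma iB).1 o0.
have hb : rB iB b = 0%N by rewrite /rB /b permK.
apply: (@rd_ge _ _ _ f 2 sigma (ldist (cuB x t iB) (cvB iB))).
- exact: ldist_metric.
- exact: consB.
apply: (@ratio_ge _ _ _ _ _ b).
- move=> y; rewrite scB //; have /andP[g1 _] := gB_range (rB iB y) x0 t1; lra.
- apply: divr_ge0; lra.
rewrite !scB // hb /gB expr0 mulr1 min_l; last lra.
rewrite min_r; last first.
  apply: (le_trans hx); apply: ler_wpM2l; first lra.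
  apply: ler_weXn2l => //; exact: ltW.
rewrite addrC mulrC divfK; lra.
Qed.



Definition sigmaA (m : nat) (o0 o1 : 'I_m) : profile 2 m :=
  [ffun i : 'I_2 => if val i == 0%N
     then ((1%g : {perm 'I_m}), [ffun _ : 'I_m.-1 => true])
     else (tperm o0 o1, [ffun _ : 'I_m.-1 => true])].

Definition swap01 (p : nat) : nat := if p == 0%N then 1%N else if p == 1%N then 0%N else p.

Lemma tperm01 (m : nat) (o0 o1 : 'I_m) (k : 'I_m) :
  val o0 = 0%N -> val o1 = 1%N -> val (tperm o0 o1 k) = swap01 (val k).
Proof.
move=> h0 h1; rewrite /swap01.
case: (eqVneq k o0) => [->|k0]; first by rewrite tpermL h0 h1.
case: (eqVneq k o1) => [->|k1]; first by rewrite tpermR h0 h1.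
rewrite tpermD 1?eq_sym //.
have : val k != 0%N by rewrite -h0 val_eqE.
have : val k != 1%N by rewrite -h1 val_eqE.
move: (val k) => v; case: v => [|[|v]] //.
Qed.

Lemma sigmaA_val (m : nat) (o0 o1 : 'I_m) (i : 'I_2) (k : 'I_m) :
  val o0 = 0%N -> val o1 = 1%N ->
  (val ((sigmaA o0 o1 i).1 k) < 2)%N = (val k < 2)%N /\
  ((2 <= val k)%N -> val ((sigmaA o0 o1 i).1 k) = val k).
Proof.
move=> h0 h1; rewrite /sigmaA ffunE; case: ifP => _ /=; rewrite ?perm1 //.
rewrite tperm01 // /swap01.
have -> : val k = nat_of_ord k by [].
by case: (nat_of_ord k) => [|[|p]].
Qed.

Definition Uc (R : realType) (alpha : R) (p : nat) : R :=
  if (p < 2)%N then 0 else alpha^-1 ^+ p.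

Definition cuC (R : realType) (m : nat) (alpha : R) (pt : Defs.point 2 m) : R :=
  match pt with inl _ => 0 | inr y => Uc alpha (val y) end.
Definition zero_c (R : realType) (m : nat) (pt : Defs.point 2 m) : R := 0.
Arguments zero_c {R m} pt.

Lemma constrA_far (R : realType) (m : nat) (alpha : R) (f : voting_rule m)
   (o0 o1 : 'I_m) (z : \bar R) :
  val o0 = 0%N -> val o1 = 1%N -> 0 < alpha -> alpha <= 1 ->
  (2 <= val (f 2 (sigmaA o0 o1)))%N -> (z <= rule_distortion alpha f)%E.
Proof.
move=> h0 h1 a0 a1 hc.
have ai0 : 0 < alpha^-1 by rewrite invr_gt0.
have Uge0 : forall p, 0 <= Uc alpha p.
  by move=> p; rewrite /Uc; case: ifP => // _; apply: exprn_ge0; apply: ltW.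
have dE : forall (i : 'I_2) (y : 'I_m),
    ldist (@cuC R m alpha) zero_c (inl i) (inr y) = Uc alpha (val y).
  move=> i y; rewrite /ldist /zero_c /= subrr normr0 sub0r normrN ger0_norm //.
  by rewrite max_l.
apply: (@rd_ge _ _ _ f 2 (sigmaA o0 o1) (ldist (@cuC R m alpha) zero_c)).
- exact: ldist_metric.
- move=> i j k1 k2 e1 e2 /=.
  have -> : ((sigmaA o0 o1) i).2 j = true.
    by rewrite /sigmaA ffunE; case: ifP => _; rewrite ffunE.
  rewrite !dE.
  have [l1 v1] := sigmaA_val i k1 h0 h1.
  have [l2 v2] := sigmaA_val i k2 h0 h1.
  case: (ltnP (val k1) 2) => hk1.
    rewrite /Uc l1 hk1; apply: mulr_ge0; [exact: ltW | exact: Uge0].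
  rewrite /Uc l1 l2 ltnNge hk1 /= (v1 hk1) (v2 ltac:(lia)) e1 e2 ltnNge.
  have hk2 : (1 < nat_of_ord k2)%N by move: e2 e1 hk1 => /=; lia.
  by rewrite hk2 /= exprS mulrA mulfV ?mul1r // gt_eqF.
have sc0 : social_cost (ldist (@cuC R m alpha) zero_c) o0 <= 0.
  by rewrite sc2 !dE /Uc h0 /= addr0.
have scc : 0 < social_cost (ldist (@cuC R m alpha) zero_c) (f 2 (sigmaA o0 o1)).
  rewrite sc2 !dE /Uc ltnNge hc /=; apply: addr_gt0; exact: exprn_gt0.
by rewrite (ratio_oo sc0 scc) leey.
Qed.

Definition UA (R : realType) (alpha : R) (p : nat) : R :=
  if p == 0%N then 0 else if p == 1%N then 2 + 2 * alpha else 10 * alpha^-1 ^+ p.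

Definition rA (m : nat) (o0 o1 : 'I_m) (iA : 'I_2) (y : 'I_m) : nat :=
  val (((sigmaA o0 o1) iA).1^-1%g y).

Definition cuA (R : realType) (m : nat) (alpha : R) (o0 o1 : 'I_m) (iA : 'I_2)
  (pt : Defs.point 2 m) : R :=
  match pt with inl i => if i == iA then 2 * alpha else 2 + 2 * alpha
  | inr y => UA alpha (rA o0 o1 iA y) end.

Lemma rA_sigma (m : nat) (o0 o1 : 'I_m) (iA i : 'I_2) (k : 'I_m) :
  val o0 = 0%N -> val o1 = 1%N ->
  rA o0 o1 iA ((sigmaA o0 o1 i).1 k) = if i == iA then val k else swap01 (val k).
Proof.
move=> h0 h1; rewrite /rA; case: eqP => [->|hne]; first by rewrite permK.
rewrite -(tperm01 k h0 h1) /sigmaA !ffunE.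
case: iA hne => [[|[|a]] ha] //=; case: i => [[|[|b]] hb] //= hne.
all: try by case: hne; apply: val_inj.
- by rewrite invg1 perm1.
- by rewrite perm1 tpermV.
Qed.

Lemma absle (R : realType) (a b c : R) :
  `|a| <= c * (- b) -> b <= 0 -> 0 <= c -> `|a| <= c * `|b|.
Proof. by move=> h hb hc; rewrite (ler0_norm hb). Qed.

Lemma chainA (R : realType) (alpha : R) (p : nat) :
  0 < alpha -> alpha <= 1 ->
  `|2 * alpha - UA alpha p| <= alpha * `|2 * alpha - UA alpha p.+1|.
Proof.
move=> a0 a1.
have hai : alpha * alpha^-1 = 1 by rewrite mulfV // gt_eqF.
have ai1 : 1 <= alpha^-1 by rewrite invf_ge1.
rewrite /UA; case: p => [|[|q]] /=.
- rewrite subr0 ger0_norm; last lra.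
  rewrite ler0_norm; last lra. lra.
- rewrite expr2.
  have h2 : 1 <= alpha^-1 * alpha^-1 by rewrite -expr2 exprn_ege1.
  apply: absle; last lra.
  + have hw : alpha * - (2 * alpha - 10 * (alpha^-1 * alpha^-1)) = 10 * alpha^-1 - 2 * alpha * alpha.
      by field; rewrite gt_eqF.
    rewrite hw ler_norml; apply/andP; split; nra.
  + lra.
- set X := alpha^-1 ^+ q.+2.
  have hX : 1 <= X by apply: exprn_ege1.
  rewrite exprS -/X.
  set Z := alpha^-1 * X.
  have hZ : alpha * Z = X by rewrite /Z mulrA hai mul1r.
  have hZ1 : 1 <= Z by rewrite /Z; nra.
  rewrite -hZ.
  apply: absle; last lra.
  + rewrite ler_norml; apply/andP; split; nra.
  + lra.
Qed.

Lemma chainB (R : realType) (alpha : R) (p : nat) :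
  0 < alpha -> alpha <= 1 ->
  `|2 + 2 * alpha - UA alpha (swap01 p)| <= alpha * `|2 + 2 * alpha - UA alpha (swap01 p.+1)|.
Proof.
move=> a0 a1.
have hai : alpha * alpha^-1 = 1 by rewrite mulfV // gt_eqF.
have ai1 : 1 <= alpha^-1 by rewrite invf_ge1.
rewrite /UA /swap01; case: p => [|[|q]] /=.
- rewrite subrr normr0 subr0; apply: mulr_ge0; [lra | exact: normr_ge0].
- rewrite expr2 subr0.
  have h2 : 1 <= alpha^-1 * alpha^-1 by rewrite -expr2 exprn_ege1.
  apply: absle; last lra.
  + have hw : alpha * - (2 + 2 * alpha - 10 * (alpha^-1 * alpha^-1)) = 10 * alpha^-1 - 2 * alpha - 2 * alpha * alpha.
      by field; rewrite gt_eqF.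
    rewrite hw ler_norml; apply/andP; split; nra.
  + lra.
- set X := alpha^-1 ^+ q.+2.
  have hX : 1 <= X by apply: exprn_ege1.
  rewrite exprS -/X.
  set Z := alpha^-1 * X.
  have hZ : alpha * Z = X by rewrite /Z mulrA hai mul1r.
  have hZ1 : 1 <= Z by rewrite /Z; nra.
  rewrite -hZ.
  apply: absle; last lra.
  + rewrite ler_norml; apply/andP; split; nra.
  + lra.
Qed.

Lemma constrA_near (R : realType) (m : nat) (alpha : R) (f : voting_rule m)
   (o0 o1 : 'I_m) :
  val o0 = 0%N -> val o1 = 1%N -> 0 < alpha -> alpha <= 1 ->
  (val (f 2 (sigmaA o0 o1)) < 2)%N ->
  ((1 + 2 * alpha)%:E <= rule_distortion alpha f)%E.
Proof.
move=> h0 h1 a0 a1 hc.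
set sigma := sigmaA o0 o1; set c := f 2 sigma.
set iA : 'I_2 := if val c == 0%N then ord0 else ord_max.
have htop : (sigma iA).1 o0 = c.
  rewrite /iA /sigma /sigmaA; case: ifP => hc0; rewrite ffunE /=.
    by rewrite perm1; apply: val_inj; rewrite h0 (eqP hc0).
  rewrite tpermL; apply: val_inj; rewrite h1; move: hc hc0; rewrite -/c /=.
  by case: (nat_of_ord c) => [|[|]].
have hrc : rA o0 o1 iA c = 0%N by rewrite -htop rA_sigma // eqxx h0.
set b := (sigma iA).1 o1.
have hrb : rA o0 o1 iA b = 1%N by rewrite rA_sigma // eqxx h1.
set d := ldist (cuA alpha o0 o1 iA) (@zero_c R m).
have dE : forall (i : 'I_2) (y : 'I_m),
    d (inl i) (inr y) = `|(if i == iA then 2 * alpha else 2 + 2 * alpha) - UA alpha (rA o0 o1 iA y)|.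
  move=> i y; rewrite /d /ldist /zero_c /= subrr normr0 max_l //.
have scE : forall y, social_cost d y = `|2 * alpha - UA alpha (rA o0 o1 iA y)| + `|2 + 2 * alpha - UA alpha (rA o0 o1 iA y)|.
  move=> y; rewrite sc2 !dE.
  have hne : (ord_max : 'I_2) != ord0 by [].
  case: (eqVneq ord0 iA) => [<-|hb].
    by rewrite (negbTE hne).
  by rewrite (other2 hb) eqxx addrC.
apply: (@rd_ge _ _ _ f 2 sigma d).
- exact: ldist_metric.
- move=> i j k1 k2 e1 e2 /=.
  have -> : (sigma i).2 j = true.
    by rewrite /sigma /sigmaA ffunE; case: ifP => _; rewrite ffunE.
  rewrite !dE !rA_sigma //; case: eqP => _; rewrite e1 e2.
    exact: chainA.
  exact: chainB.
apply: (@ratio_ge _ _ _ _ _ b).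
- move=> y; rewrite scE.
  have := ler_norm (- (2 * alpha - UA alpha (rA o0 o1 iA y))).
  have := ler_norm (2 + 2 * alpha - UA alpha (rA o0 o1 iA y)).
  rewrite normrN; lra.
- lra.
rewrite !scE hrb hrc /UA /= subr0 subrr normr0 addr0.
have e1 : `|2 * alpha - (2 + 2 * alpha)| = 2 by rewrite ler0_norm; lra.
have e2 : `|2 * alpha| = 2 * alpha by rewrite ger0_norm; lra.
have e3 : `|2 + 2 * alpha - 0| = 2 + 2 * alpha by rewrite subr0 ger0_norm; lra.
rewrite e1 e2 e3; lra.
Qed.



Lemma exists_t0 (R : realType) (alpha T1 : R) (k : nat) :
  0 <= alpha -> alpha < 1 -> (1 <= k)%N -> 1 <= T1 -> alpha ^+ k * T1 < 1 ->
  exists t, [/\ 1 < t, alpha * t < 1 & T1 < t ^+ k].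
Proof.
move=> a0 a1 hk hT hq.
case: (eqVneq alpha 0) => [->|an0].
  exists (T1 + 1); split; [lra | rewrite mul0r; lra |].
  apply: (lt_le_trans (y := T1 + 1)); first lra.
  rewrite -{1}(expr1 (T1 + 1)); apply: ler_weXn2l => //; lra.
have apos : 0 < alpha by rewrite lt_def an0.
set q := alpha ^+ k * T1.
have hb0 : 0 <= alpha ^+ k by apply: exprn_ge0.
set M := Num.max q alpha.
have hM1 : M < 1 by rewrite /M gt_max hq a1.
have hMq : q <= M by rewrite /M le_max lexx.
have hMa : alpha <= M by rewrite /M le_max lexx orbT.
have k0 : 1 <= k%:R :> R by rewrite ler1n.
set e := (1 - M) / (2 * k%:R).
have ke : k%:R * e = (1 - M) / 2 by rewrite /e; field; rewrite gt_eqF //; lra.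
have e0 : 0 < e by rewrite /e divr_gt0 //; lra.
have e2 : e <= (1 - M) / 2 by rewrite -ke; nra.
set s := 1 - e.
have s0 : 0 <= s by rewrite /s; lra.
have hs : q < s ^+ k.
  apply: (lt_le_trans _ (bernoulli k s0)).
  have -> : 1 - s = e by rewrite /s; ring.
  rewrite ke; lra.
exists (s / alpha); split.
- by rewrite ltr_pdivlMr // mul1r /s; lra.
- by rewrite mulrC divfK //; rewrite /s; lra.
- rewrite expr_div_n ltr_pdivlMr ?exprn_gt0 //.
  by rewrite mulrC.
Qed.

Lemma exists_t (R : realType) (alpha z : R) (k : nat) :
  0 <= alpha -> alpha < 1 -> (1 <= k)%N ->
  z < 1 + 2 * ((1 - alpha ^+ k) / (1 + alpha ^+ k)) ->
  exists t, [/\ 1 < t, alpha * t < 1 & z < 1 + 2 * ((t ^+ k - 1) / (t ^+ k + 1))].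
Proof.
move=> a0 a1 hk hz.
set b := alpha ^+ k in hz.
have b0 : 0 <= b by apply: exprn_ge0.
have b1 : b < 1 by rewrite /b exprn_ilt1 //; lia.
have hz' : (z - 1) * (1 + b) < 2 * (1 - b).
  have h : z - 1 < 2 * (1 - b) / (1 + b) by rewrite -mulrA; lra.
  by rewrite ltr_pdivlMr in h; lra.
have z3 : z < 3 by nra.
set T0 := (1 + z) / (3 - z).
have hT0 : b * T0 < 1.
  rewrite /T0 mulrA ltr_pdivrMr; lra.
set T1 := Num.max 1 T0.
have hT1 : b * T1 < 1.
  by rewrite /T1; case: (leP 1 T0) => h //; rewrite mulr1.
have T1ge : 1 <= T1 by rewrite le_max lexx.
have [t [t1 at1 tT]] := exists_t0 a0 a1 hk T1ge hT1.
exists t; split => //.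
set T := t ^+ k in tT *.
have T0le : T0 <= T1 by rewrite le_max lexx orbT.
have : T0 < T by lra.
rewrite /T0 ltr_pdivrMr; last lra.
move=> h.
have Tp : 0 < T + 1 by lra.
suff : (z - 1) * (T + 1) < 2 * (T - 1).
  rewrite -ltr_pdivlMr // => h2; rewrite mulrA; lra.
nra.
Qed.



Lemma constrA_all (R : realType) (m : nat) (alpha : R) (f : voting_rule m) :
  (2 <= m)%N -> 0 < alpha -> alpha <= 1 ->
  ((1 + 2 * alpha)%:E <= rule_distortion alpha f)%E.
Proof.
case: m f => [|[|m']] f hm // ap a1.
set o0 := @ord0 m'.+1; set o1 := @Ordinal m'.+2 1 isT.
case: (ltnP (val (f 2%N (sigmaA o0 o1))) 2) => hc.
  by apply: (@constrA_near R _ alpha f o0 o1).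
by apply: (@constrA_far R _ alpha f o0 o1).
Qed.

Lemma constrB_all (R : realType) (m : nat) (alpha : R) (f : voting_rule m) :
  (2 <= m)%N -> 0 <= alpha -> alpha < 1 ->
  ((1 + 2 * ((1 - alpha ^+ m./2) / (1 + alpha ^+ m./2)))%:E <= rule_distortion alpha f)%E.
Proof.
move=> hm a0 a1.
have hk : (1 <= m./2)%N by have := odd_double_half m; rewrite -addnn; move: (m./2) => kk; lia.
apply: sup_approx => z hz.
have [t [t1 at1 hzt]] := exists_t a0 a1 hk hz.
set T := t ^+ m./2 in hzt.
have hT : 1 < T.
  rewrite /T; apply: (lt_le_trans t1).
  rewrite -{1}(expr1 t); apply: ler_weXn2l => //; exact: ltW.
set x := 2 / (T - 1).
have x0 : 0 < x by rewrite /x divr_gt0 //; lra.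
have hx : x + 2 <= x * t ^+ m./2.
  have e : x * T = x + 2 by rewrite /x; field; lra.
  by rewrite -/T e.
apply: le_trans (constrB f hm a0 a1 t1 at1 x0 hx).
rewrite lee_fin; apply: ltW; apply: (lt_le_trans hzt).
have e : 1 + 2 * ((T - 1) / (T + 1)) = (3 + x) / (1 + x).
  rewrite /x; field; apply/andP; split; rewrite gt_eqF //; lra.
by rewrite e.
Qed.

Unset Implicit Arguments.
Theorem theorem1 (R : realType) (m : nat) (alpha : R) (f : voting_rule m) :
  (2 <= m)%N -> 0 <= alpha -> alpha <= 1 ->
  ((1 + 2 * Num.max alpha ((1 - alpha ^+ m./2) / (1 + alpha ^+ m./2)))%:E
     <= rule_distortion alpha f)%E.
Proof.
move=> hm a0 a1.
have hk : (1 <= m./2)%N by have := odd_double_half m; rewrite -addnn; move: (m./2) => kk; lia.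
have b0 : 0 <= alpha ^+ m./2 by apply: exprn_ge0.
have b1 : alpha ^+ m./2 <= 1 by apply: exprn_ile1.
have W0 : 0 <= (1 - alpha ^+ m./2) / (1 + alpha ^+ m./2) by apply: divr_ge0; lra.
case: (leP alpha ((1 - alpha ^+ m./2) / (1 + alpha ^+ m./2))) => h.
  apply: constrB_all => //.
  rewrite lt_neqAle a1 andbT; apply/negP => /eqP e.
  move: h; rewrite e expr1n subrr mul0r; lra.
apply: constrA_all => //; lra.
Qed.
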